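(* Let $\mathcal{A}\in\mathcal{T}'_7$ with $c_{13}^4=c_{14}^5=c_{15}^6=c_{24}^5=c_{25}^6=c_{14}^6=c_{24}^6=c_{13}^6=0$ and $c_{13}^5c_{35}^6c_{46}^7\ne0$. Then the automorphisms of $\mathcal{A}$ are exactly the linear maps $\varphi$ with $\varphi(e_1)=e_1+a_{71}e_7$, $\varphi(e_2)=e_2+a_{72}e_7$, $\varphi(e_i)=e_i$ for $3\le i\le7$, where $a_{71},a_{72}\in\mathbb{C}$.
   Context: Over $\mathbb{C}$, basis $e_1,\dots,e_n$, $e_ie_j=\sum_kc_{ij}^ke_k$. For $n\ge3$, $\mathcal{T}'_n$ is the family of anticommutative algebra structures with $c_{ij}^k=0$ whenever $k\le\max\{i,j\}$ and $e_ie_{i+1}=e_{i+2}$ for $1\le i\le n-2$, other structure constants arbitrary subject to these and anticommutativity. *)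

(* Defs.v *)
From HB Require Import structures.
From mathcomp Require Import all_boot all_order all_algebra.
From mathcomp Require Import complex.
From mathcomp Require Import Rstruct.
Set Implicit Arguments. Unset Strict Implicit. Unset Printing Implicit Defensive.
Import Order.TTheory GRing.Theory Num.Theory.
Local Open Scope ring_scope.

Notation CC := (complex Rdefinitions.R).

(* Structure constants of an n-dimensional algebra with basis e_1..e_n,
   stored 0-indexed: c i j k is the coefficient of e_(k+1) in e_(i+1) e_(j+1). *)
Definition sconst (n : nat) := 'I_n -> 'I_n -> 'I_n -> CC.

(* 1-indexed access: C_ c i j k = c_{ij}^k *)
Definition C_ (n : nat) (c : sconst n.+1) (i j k : nat) : CC :=
  c (inord i.-1) (inord j.-1) (inord k.-1).

Definition in_Tprime (n : nat) (c : sconst n) : Prop :=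
  [/\ (forall i j k, c i j k = - c j i k),
      (forall i j k : 'I_n, (k <= maxn i j)%N -> c i j k = 0) &
      (forall i j k : 'I_n, nat_of_ord j = i.+1 -> c i j k = (nat_of_ord k == i.+2)%:R)].

Definition algmul (n : nat) (c : sconst n) (x y : 'cV[CC]_n) : 'cV[CC]_n :=
  \col_k \sum_i \sum_j x i 0 * y j 0 * c i j k.

(* A linear map phi, given by its matrix A (phi(e_j) = column j of A),
   is an automorphism: bijective and multiplicative. *)
Definition is_automorphism (n : nat) (c : sconst n) (A : 'M[CC]_n) : Prop :=
  A \in unitmx /\
  forall x y : 'cV[CC]_n, A *m algmul c x y = algmul c (A *m x) (A *m y).

(* Main.v *)
Require Import Defs.
From HB Require Import structures.
From mathcomp Require Import all_boot all_order all_algebra.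
From mathcomp Require Import complex Rstruct zify ring.
Import Order.TTheory GRing.Theory Num.Theory.
Local Open Scope ring_scope.
Set Implicit Arguments. Unset Strict Implicit.

Section Gen.
Variable R : fieldType.
Inductive tg := Z0 | One | MOne | Cf of R.
Definition tv (t : tg)   : R := match t with Z0 => 0 | One => 1 | MOne => -1 | Cf c => c end.
Definition addt (x   : R) (t : tg) (r   : R)   : R :=
  match t with Z0 => r | One => x + r | MOne => - x + r | Cf c => x * c + r end.
Lemma addtE x t r : x * tv t + r = addt x t r.
Proof. by case: t => [||| c] /=; rewrite ?mulr0 ?add0r ?mulr1 ?mulrN1. Qed.

Definition cft (g : nat -> nat -> nat -> R) (i j k : nat) : tg :=
  match i, j, k with
  | 0,1,2 | 1,2,3 | 2,3,4 | 3,4,5 | 4,5,6 => One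
  | 1,0,2 | 2,1,3 | 3,2,4 | 4,3,5 | 5,4,6 => MOne
  | 0,2,4 => Cf (g 0%N 2%N 4%N) | 2,0,4 => Cf (- g 0%N 2%N 4%N)
  | 0,2,6 => Cf (g 0%N 2%N 6%N) | 2,0,6 => Cf (- g 0%N 2%N 6%N)
  | 0,3,6 => Cf (g 0%N 3%N 6%N) | 3,0,6 => Cf (- g 0%N 3%N 6%N)
  | 0,4,6 => Cf (g 0%N 4%N 6%N) | 4,0,6 => Cf (- g 0%N 4%N 6%N)
  | 0,5,6 => Cf (g 0%N 5%N 6%N) | 5,0,6 => Cf (- g 0%N 5%N 6%N)
  | 1,3,6 => Cf (g 1%N 3%N 6%N) | 3,1,6 => Cf (- g 1%N 3%N 6%N)
  | 1,4,6 => Cf (g 1%N 4%N 6%N) | 4,1,6 => Cf (- g 1%N 4%N 6%N)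
  | 1,5,6 => Cf (g 1%N 5%N 6%N) | 5,1,6 => Cf (- g 1%N 5%N 6%N)
  | 2,4,5 => Cf (g 2%N 4%N 5%N) | 4,2,5 => Cf (- g 2%N 4%N 5%N)
  | 2,4,6 => Cf (g 2%N 4%N 6%N) | 4,2,6 => Cf (- g 2%N 4%N 6%N)
  | 2,5,6 => Cf (g 2%N 5%N 6%N) | 5,2,6 => Cf (- g 2%N 5%N 6%N)
  | 3,5,6 => Cf (g 3%N 5%N 6%N) | 5,3,6 => Cf (- g 3%N 5%N 6%N)
  | _,_,_ => Z0
  end.
Definition cf g i j k := tv (cft g i j k).

Definition ssum (l : seq (nat * nat)) (F : nat -> nat -> R) (T : nat -> nat -> tg)   : R :=
  foldr (fun p r => addt (F p.1 p.2) (T p.1 p.2) r) 0 l.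
Lemma ssumE l F T : ssum l F T = \sum_(p <- l) F p.1 p.2 * tv (T p.1 p.2).
Proof. by elim: l => [|p l IH]; rewrite ?big_nil ?big_cons //= IH addtE. Qed.
Definition l1 : seq (nat*nat) := [seq (0%N, k) | k <- iota 0 7].
Definition l2 : seq (nat*nat) := [seq (u, v) | u <- iota 0 7, v <- iota 0 7].

Lemma ordsum (F : nat -> R) : \sum_(k < 7) F k = \sum_(k <- iota 0 7) F k.
Proof. by rewrite -(big_mkord xpredT) /index_iota subn0. Qed.

Lemma l1E (F : nat -> R) (T : nat -> tg) :
  \sum_(k < 7) F k * tv (T k) = ssum l1 (fun _ k => F k) (fun _ k => T k).
Proof. by rewrite ssumE (ordsum (fun k => F k * tv (T k))) /l1 big_map. Qed.

Lemma l2E (F : nat -> nat -> R) (T : nat -> nat -> tg) :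
  \sum_(u < 7) \sum_(v < 7) F u v * tv (T u v) = ssum l2 F T.
Proof.
rewrite ssumE /l2 big_allpairs (ordsum (fun u => \sum_(v < 7) F u v * tv (T u v))).
by apply: eq_bigr => u _; rewrite (ordsum (fun v => F u v * tv (T u v))).
Qed.


Lemma gE (g : nat -> nat -> nat -> R) (h2 : (2%:R : R) != 0)
  (As : forall i j k, (i < 7)%N -> (j < 7)%N -> (k < 7)%N -> g i j k = - g j i k)
  (Z : forall i j k, (i < 7)%N -> (j < 7)%N -> (k < 7)%N -> (k <= maxn i j)%N -> g i j k = 0)
  (C1 : forall i k, (i.+1 < 7)%N -> (k < 7)%N -> g i i.+1 k = (k == i.+2)%:R)
  (z1 : g 0%N 2%N 3%N = 0) (z2 : g 0%N 3%N 4%N = 0) (z3 : g 0%N 4%N 5%N = 0) (z4 : g 1%N 3%N 4%N = 0)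
  (z5 : g 1%N 4%N 5%N = 0) (z6 : g 0%N 3%N 5%N = 0) (z7 : g 1%N 3%N 5%N = 0) (z8 : g 0%N 2%N 5%N = 0) :
  forall i j k, (i < 7)%N -> (j < 7)%N -> (k < 7)%N -> g i j k = cf g i j k.
Proof.
have D : forall i k, (i < 7)%N -> (k < 7)%N -> g i i k = 0.
  move=> i k hi hk; have := As i i k hi hi hk.
  move/eqP; rewrite -subr_eq0 opprK -mulr2n -mulr_natr mulf_eq0 (negbTE h2) orbF.
  by move/eqP.
do 7?[case=> [|]]; try (move=> *; exfalso; lia);
do 7?[case=> [|]]; try (move=> *; exfalso; lia);
do 7?[case=> [|]]; try (move=> *; exfalso; lia);
move=> _ _ _; rewrite /cf /cft /tv /=;
first [ done
      | by apply: Z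
      | by apply: D
      | by rewrite C1 //= ?mulr1n ?mulr0n
      | by rewrite As // C1 //= ?mulr1n ?mulr0n ?oppr0
      | by rewrite As
      | by rewrite ?z1 ?z2 ?z3 ?z4 ?z5 ?z6 ?z7 ?z8
      | by rewrite As // ?z1 ?z2 ?z3 ?z4 ?z5 ?z6 ?z7 ?z8 ?oppr0
      | idtac ].
Qed.


Ltac zs a e := repeat match goal with
 | H : a ?m ?k = 0 |- _ => match type of e with context[a m k] => rewrite H in e end
 | H : a ?m ?k = 1 |- _ => match type of e with context[a m k] => rewrite H in e end end.
Ltac csimp e := rewrite ?(mulr0, mul0r, addr0, add0r, mulr1, mul1r, oppr0, opprK, mulrN, mulNr, subr0, sub0r) in e.
Ltac step a E i j m := let e := fresh "e" in pose proof (E i j m isT isT isT) as e;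
  cbv beta iota zeta delta [ssum l1 l2 allpairs_dep iota foldr map flatten cat addt cft fst snd] in e; zs a e; csimp e; revert e.
Ltac pg := match goal with |- ?G => idtac G end.

Lemma nz_l (u v : R) : u * v != 0 -> u != 0.
Proof. by rewrite mulf_eq0 negb_or => /andP[]. Qed.
Lemma nz_r (u v : R) : u * v != 0 -> v != 0.
Proof. by rewrite mulf_eq0 negb_or => /andP[]. Qed.
Lemma cancel0 (u v : R) : u != 0 -> u * v = 0 -> v = 0.
Proof. by move=> hu /eqP; rewrite mulf_eq0 (negbTE hu) /= => /eqP. Qed.
Lemma cancel0r (u v : R) : u != 0 -> v * u = 0 -> v = 0.
Proof. by move=> hu; rewrite mulrC; apply: cancel0. Qed.

Lemma m3l (x u w : R) : u != 0 -> w != 0 -> x * u * w = 0 -> x = 0.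
Proof. by move=> hu hw /eqP; rewrite !mulf_eq0 (negbTE hu) (negbTE hw) !orbF => /eqP. Qed.
Lemma m3m (x u w : R) : u != 0 -> w != 0 -> u * x * w = 0 -> x = 0.
Proof. by move=> hu hw /eqP; rewrite !mulf_eq0 (negbTE hu) (negbTE hw) /= orbF => /eqP. Qed.

Lemma core (g : nat->nat->nat->R) (a : nat->nat->R)
 (E : forall i j m, (i<7)%N->(j<7)%N->(m<7)%N->
   ssum l1 (fun _ k => a m k) (fun _ k => cft g i j k) = ssum l2 (fun u v => a u i * a v j) (fun u v => cft g u v m))
 (nz : g 0%N 2%N 4%N * g 2%N 4%N 5%N * g 3%N 5%N 6%N != 0)
 (inv : a 0%N 6%N = 0 -> a 1%N 6%N = 0 -> a 2%N 6%N = 0 -> a 3%N 6%N = 0 -> a 4%N 6%N = 0 -> a 5%N 6%N = 0 -> a 6%N 6%N = 0 -> False) :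
 forall m k, (m < 7)%N -> (k < 7)%N -> (2 <= k)%N || (m < 6)%N -> a m k = (m == k)%:R.
Proof.
have z02 : a 0%N 2%N = 0 by step a E 0%N 1%N 0%N; apply.
have z12 : a 1%N 2%N = 0 by step a E 0%N 1%N 1%N; apply.
have d22 : a 2%N 2%N = a 0%N 0%N * a 1%N 1%N - a 1%N 0%N * a 0%N 1%N by step a E 0%N 1%N 2%N; apply.
have z03 : a 0%N 3%N = 0 by step a E 1%N 2%N 0%N; apply.
have z13 : a 1%N 3%N = 0 by step a E 1%N 2%N 1%N; apply.
have z23 : a 2%N 3%N = 0 by step a E 1%N 2%N 2%N; apply.
have d33 : a 3%N 3%N = a 1%N 1%N * a 2%N 2%N by step a E 1%N 2%N 3%N; apply.
have z04 : a 0%N 4%N = 0 by step a E 2%N 3%N 0%N; apply.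
have z14 : a 1%N 4%N = 0 by step a E 2%N 3%N 1%N; apply.
have z24 : a 2%N 4%N = 0 by step a E 2%N 3%N 2%N; apply.
have z34 : a 3%N 4%N = 0 by step a E 2%N 3%N 3%N; apply.
have d44 : a 4%N 4%N = a 2%N 2%N * a 3%N 3%N by step a E 2%N 3%N 4%N; apply.
have z05 : a 0%N 5%N = 0 by step a E 3%N 4%N 0%N; apply.
have z15 : a 1%N 5%N = 0 by step a E 3%N 4%N 1%N; apply.
have z25 : a 2%N 5%N = 0 by step a E 3%N 4%N 2%N; apply.
have z35 : a 3%N 5%N = 0 by step a E 3%N 4%N 3%N; apply.
have z45 : a 4%N 5%N = 0 by step a E 3%N 4%N 4%N; apply.
have d55 : a 5%N 5%N = a 3%N 3%N * a 4%N 4%N by step a E 3%N 4%N 5%N; apply.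
have z06 : a 0%N 6%N = 0 by step a E 4%N 5%N 0%N; apply.
have z16 : a 1%N 6%N = 0 by step a E 4%N 5%N 1%N; apply.
have z26 : a 2%N 6%N = 0 by step a E 4%N 5%N 2%N; apply.
have z36 : a 3%N 6%N = 0 by step a E 4%N 5%N 3%N; apply.
have z46 : a 4%N 6%N = 0 by step a E 4%N 5%N 4%N; apply.
have z56 : a 5%N 6%N = 0 by step a E 4%N 5%N 5%N; apply.
have d66 : a 6%N 6%N = a 4%N 4%N * a 5%N 5%N by step a E 4%N 5%N 6%N; apply.
have n66 : a 6%N 6%N != 0 by apply/eqP; apply: inv.
have n44 : a 4%N 4%N != 0 by move: n66; rewrite d66; apply: nz_l.
have n55 : a 5%N 5%N != 0 by move: n66; rewrite d66; apply: nz_r.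
have n33 : a 3%N 3%N != 0 by move: n55; rewrite d55; apply: nz_l.
have n22 : a 2%N 2%N != 0 by move: n44; rewrite d44; apply: nz_l.
have n11 : a 1%N 1%N != 0 by move: n33; rewrite d33; apply: nz_l.
have np : g 0%N 2%N 4%N != 0 by move: nz; do 2 move/nz_l.
have nal : g 2%N 4%N 5%N != 0 by move: nz; move/nz_l/nz_r.
have nde : g 3%N 5%N 6%N != 0 by move: nz; move/nz_r.
have z10 : a 1%N 0%N = 0 by step a E 0%N 2%N 3%N => /esym; apply: cancel0r.
have z20 : a 2%N 0%N = 0 by step a E 0%N 3%N 4%N => /esym; apply: cancel0r.
have z21 : a 2%N 1%N = 0 by step a E 1%N 3%N 4%N => /esym; apply: cancel0r.
have z32 : a 3%N 2%N = 0 by step a E 0%N 1%N 3%N; apply.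
have o11 : a 1%N 1%N = 1.
  step a E 2%N 4%N 5%N; rewrite d55 d33 => /eqP; rewrite -subr_eq0.
  have -> : a 1%N 1%N * a 2%N 2%N * a 4%N 4%N * g 2%N 4%N 5%N - a 2%N 2%N * a 4%N 4%N * g 2%N 4%N 5%N = (a 1%N 1%N - 1) * (a 2%N 2%N * a 4%N 4%N * g 2%N 4%N 5%N) by ring.
  rewrite mulf_eq0 (negbTE (mulf_neq0 (mulf_neq0 n22 n44) nal)) orbF subr_eq0; by move/eqP.
have z30 : a 3%N 0%N = 0 by step a E 0%N 4%N 5%N => /esym; apply: cancel0r.
have z31 : a 3%N 1%N = 0 by step a E 1%N 4%N 5%N => /esym; apply: cancel0r.
have z40 : a 4%N 0%N = 0 by step a E 0%N 3%N 5%N => /esym /eqP; rewrite oppr_eq0 => /eqP; apply: cancel0r.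
have z41 : a 4%N 1%N = 0 by step a E 1%N 3%N 5%N => /esym /eqP; rewrite oppr_eq0 => /eqP; apply: cancel0r.
have z42 : a 4%N 2%N = 0 by step a E 0%N 1%N 4%N; apply.
have d43 : a 4%N 3%N = a 0%N 1%N * a 2%N 2%N * g 0%N 2%N 4%N by step a E 1%N 2%N 4%N; apply.
have d54 : a 5%N 4%N = a 2%N 2%N * a 4%N 3%N * g 2%N 4%N 5%N by step a E 2%N 3%N 5%N; apply.
have z54 : a 5%N 4%N = 0 by step a E 0%N 2%N 5%N; apply: cancel0r.
have z43 : a 4%N 3%N = 0 by apply: (m3m n22 nal); rewrite -d54.
have z01 : a 0%N 1%N = 0 by apply: (m3l n22 np); rewrite -d43.
have o22 : a 2%N 2%N = 1.
  step a E 3%N 5%N 6%N; rewrite d66 d44 => /eqP; rewrite -subr_eq0.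
  have -> : a 2%N 2%N * a 3%N 3%N * a 5%N 5%N * g 3%N 5%N 6%N - a 3%N 3%N * a 5%N 5%N * g 3%N 5%N 6%N = (a 2%N 2%N - 1) * (a 3%N 3%N * a 5%N 5%N * g 3%N 5%N 6%N) by ring.
  rewrite mulf_eq0 (negbTE (mulf_neq0 (mulf_neq0 n33 n55) nde)) orbF subr_eq0; by move/eqP.
have o00 : a 0%N 0%N = 1 by move: d22; rewrite o22 o11 z10 mul0r subr0 mulr1 => <-.
have o33 : a 3%N 3%N = 1 by rewrite d33 o11 o22 mulr1.
have o44 : a 4%N 4%N = 1 by rewrite d44 o22 o33 mulr1.
have o55 : a 5%N 5%N = 1 by rewrite d55 o33 o44 mulr1.
have o66 : a 6%N 6%N = 1 by rewrite d66 o44 o55 mulr1.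
have z50 : a 5%N 0%N = 0.
  step a E 0%N 4%N 6%N; move=> h; have -> : a 5%N 0%N = g 0%N 4%N 6%N - (g 0%N 4%N 6%N - a 5%N 0%N) by ring.
  by rewrite -h subrr.
have z51 : a 5%N 1%N = 0.
  step a E 1%N 4%N 6%N; move=> h; have -> : a 5%N 1%N = g 1%N 4%N 6%N - (g 1%N 4%N 6%N - a 5%N 1%N) by ring.
  by rewrite -h subrr.
have z52 : a 5%N 2%N = 0 by step a E 0%N 1%N 5%N; apply.
have z62 : a 6%N 2%N = 0 by step a E 0%N 1%N 6%N; apply.
have z53 : a 5%N 3%N = 0 by step a E 1%N 2%N 5%N; apply.
have z63 : a 6%N 3%N = 0 by step a E 1%N 2%N 6%N; apply.
have z64 : a 6%N 4%N = 0 by step a E 2%N 3%N 6%N; apply.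
have z65 : a 6%N 5%N = 0 by step a E 3%N 4%N 6%N; apply.
move=> m k.
case: m => [|[|[|[|[|[|[|m]]]]]]] hm //; case: k => [|[|[|[|[|[|[|k]]]]]]] hk //= hc;
  rewrite ?mulr1n ?mulr0n; assumption.
Qed.
End Gen.

Lemma sum_delta (F : 'I_7 -> CC) (i : 'I_7) :
  \sum_u (delta_mx i (0 : 'I_1) u 0 * F u) = F i.
Proof.
rewrite (bigD1 i) //= big1 => [|u /negbTE hu]; first by rewrite mxE !eqxx mul1r addr0.
by rewrite mxE hu mul0r.
Qed.

Lemma algmul_delta (c : sconst 7) (i j : 'I_7) :
  algmul c (delta_mx i 0) (delta_mx j 0) = \col_k c i j k.
Proof.
apply/matrixP => k l; rewrite !mxE.
rewrite -[RHS](sum_delta (fun u => c u j k)).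
apply: eq_bigr => u _; rewrite -[in RHS](sum_delta (fun v => c u v k)) mulr_sumr.
by apply: eq_bigr => v _; rewrite mulrA.
Qed.

Lemma Eqn (c : sconst 7) (A : 'M[CC]_7)
  (H : forall x y : 'cV[CC]_7, A *m algmul c x y = algmul c (A *m x) (A *m y))
  (i j m : 'I_7) :
  \sum_k A m k * c i j k = \sum_u \sum_v A u i * A v j * c u v m.
Proof.
have := H (delta_mx i 0) (delta_mx j 0); move/matrixP/(_ m 0).
rewrite -!colE algmul_delta !mxE => e.
transitivity (\sum_k A m k * (\col_k c i j k) k 0); first by apply: eq_bigr => k _; rewrite mxE.
rewrite e.
by apply: eq_bigr => u _; apply: eq_bigr => v _; rewrite !mxE.
Qed.

Lemma dmul (i j : 'I_7) (v : 'cV[CC]_7) : delta_mx i j *m v = v j 0 *: delta_mx i 0.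
Proof.
apply/matrixP => r l; rewrite !mxE (bigD1 j) //= big1 => [|k /negbTE hk]; last by rewrite mxE hk andbF mul0r.
by rewrite !mxE eqxx andbT [l]ord1 eqxx andbT addr0 mulrC.
Qed.

Lemma Amul (a1 a2 : CC) (v : 'cV[CC]_7) :
  (1%:M + a1 *: delta_mx (inord 6) (inord 0) + a2 *: delta_mx (inord 6) (inord 1)) *m v
  = v + (a1 * v (inord 0) 0 + a2 * v (inord 1) 0) *: delta_mx (inord 6) 0.
Proof.
by rewrite !mulmxDl mul1mx -!scalemxAl !dmul !scalerA -addrA scalerDl.
Qed.

Unset Implicit Arguments.
Theorem mainTheorem17 (c : sconst 7) :
  in_Tprime c ->
  C_ c 1 3 4 = 0 -> C_ c 1 4 5 = 0 -> C_ c 1 5 6 = 0 -> C_ c 2 4 5 = 0 ->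
  C_ c 2 5 6 = 0 -> C_ c 1 4 6 = 0 -> C_ c 2 4 6 = 0 -> C_ c 1 3 6 = 0 ->
  C_ c 1 3 5 * C_ c 3 5 6 * C_ c 4 6 7 != 0 ->
  forall A : 'M[CC]_7,
    is_automorphism c A <->
    exists a71 a72 : CC,
      A = 1%:M + a71 *: delta_mx (inord 6) (inord 0)
               + a72 *: delta_mx (inord 6) (inord 1).
Proof.
move=> [Han Hz Hc] h134 h145 h156 h245 h256 h146 h246 h136 hnz A.
have cz : forall i j k : 'I_7, (k <= maxn i j)%N -> c i j k = 0 by move=> i j k; apply: Hz.
have cdiag : forall i k : 'I_7, c i i k = 0.
  move=> i k; have := Han i i k.
  move/eqP; rewrite -subr_eq0 opprK -mulr2n -mulr_natr mulf_eq0 pnatr_eq0 orbF.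
  by move/eqP.
have c6 : forall j k : 'I_7, c (inord 6) j k = 0.
  move=> j k; apply: cz; rewrite inordK // leq_max; by have := ltn_ord k; rewrite ltnS => ->.
have c6' : forall i k : 'I_7, c i (inord 6) k = 0.
  move=> i k; apply: cz; rewrite inordK // leq_max; by have := ltn_ord k; rewrite ltnS => ->; rewrite orbT.
have c01 : forall (i j k : 'I_7), (k <= 1)%N -> c i j k = 0.
  move=> i j k hk; case: (eqVneq i j) => [->|hij]; first exact: cdiag.
  apply: cz; apply: (leq_trans hk); rewrite leq_max.
  case: i j hij => [[|i] hi] [[|j] hj] //=.
have al01 : forall (x y : 'cV[CC]_7) (k : 'I_7), (k <= 1)%N -> algmul c x y k 0 = 0.
  move=> x y k hk; rewrite mxE big1 // => i _; rewrite big1 // => j _.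
  by rewrite c01 // mulr0.
have n06 : (inord 0 : 'I_7) != inord 6 by rewrite -val_eqE /= !inordK.
have n16 : (inord 1 : 'I_7) != inord 6 by rewrite -val_eqE /= !inordK.
split; last first.
  move=> [a1 [a2 ->]]; split.
    set N := a1 *: delta_mx (inord 6) (inord 0) + a2 *: delta_mx (inord 6) (inord 1) : 'M[CC]_7.
    have NN : N *m N = 0.
      rewrite /N mulmxDl !mulmxDr -!scalemxAl -!scalemxAr !mul_delta_mx_0 //.
      by rewrite !scaler0 !addr0.
    apply: (proj1 (mulmx1_unit (B := 1%:M - N) _)).
    rewrite -addrA -/N mulmxDl mul1mx mulmxBr mulmx1 NN subr0.
    by rewrite subrK.
  move=> x y.
  rewrite !Amul !al01 ?inordK // !mulr0 addr0 scale0r addr0.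
  apply/matrixP => k l; rewrite !mxE; apply: eq_bigr => i _; apply: eq_bigr => j _.
  rewrite !mxE.
  case: (eqVneq i (inord 6)) => [->|hi]; first by rewrite c6 !mulr0.
  case: (eqVneq j (inord 6)) => [->|hj]; first by rewrite c6' !mulr0.
  by rewrite /= ?mulr0n !mulr0 !addr0.
move=> [hu H].
pose g := fun i j k : nat => c (inord i) (inord j) (inord k).
pose a := fun m k : nat => A (inord m) (inord k).
have h2 : (2%:R : CC) != 0 by rewrite pnatr_eq0.
have As' : forall i j k, (i < 7)%N -> (j < 7)%N -> (k < 7)%N -> g i j k = - g j i k.
  by move=> i j k _ _ _; apply: Han.
have Z' : forall i j k, (i < 7)%N -> (j < 7)%N -> (k < 7)%N -> (k <= maxn i j)%N -> g i j k = 0.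
  by move=> i j k hi hj hk hm; apply: Hz; rewrite !inordK.
have C1' : forall i k, (i.+1 < 7)%N -> (k < 7)%N -> g i i.+1 k = (k == i.+2)%:R.
  move=> i k hi hk; rewrite /g Hc; first by rewrite (inordK hk) (inordK (ltnW hi)).
  by rewrite (inordK hi) (inordK (ltnW hi)).
have gEq := gE h2 As' Z' C1' h134 h145 h156 h245 h256 h146 h246 h136.
have ce : forall u v k : 'I_7, c u v k = tv (cft g u v k).
  move=> u v k; have -> : c u v k = g u v k by rewrite /g !inord_val.
  by rewrite gEq ?ltn_ord.
have ae : forall p q : 'I_7, A p q = a p q.
  by move=> p q; rewrite /a !inord_val.
have E : forall i j m, (i<7)%N->(j<7)%N->(m<7)%N->
   ssum l1 (fun _ k => a m k) (fun _ k => cft g i j k) = ssum l2 (fun u v => a u i * a v j) (fun u v => cft g u v m).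
  move=> i j m hi hj hm.
  rewrite -(l1E (a m) (cft g i j)) -(l2E (fun u v => a u i * a v j) (fun u v => cft g u v m)).
  have e := Eqn H (inord i) (inord j) (inord m).
  transitivity (\sum_k A (inord m) k * c (inord i) (inord j) k).
    by apply: eq_bigr => kk _; rewrite ce ae !inordK.
  rewrite e; apply: eq_bigr => uu _; apply: eq_bigr => vv _.
  by rewrite ce !ae !inordK.
have inv : a 0%N 6%N = 0 -> a 1%N 6%N = 0 -> a 2%N 6%N = 0 -> a 3%N 6%N = 0 -> a 4%N 6%N = 0 -> a 5%N 6%N = 0 -> a 6%N 6%N = 0 -> False.
  move=> h0 h1 h2' h3 h4 h5 h6.
  have hc : col (inord 6) A = 0.
    apply/matrixP => r l; rewrite !mxE.
    case: r => rv hr; have -> : Ordinal hr = inord rv by apply/val_inj; rewrite /= inordK.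
    by case: rv hr => [|[|[|[|[|[|[|rv]]]]]]] hr //; lia.
  rewrite colE in hc.
  have := congr1 (mulmx (invmx A)) hc; rewrite mulKmx // mulmx0.
  move/matrixP/(_ (inord 6) 0); rewrite !mxE !eqxx /= => /eqP.
  by rewrite ?mulr1n oner_eq0.
have K := core E hnz inv.
exists (A (inord 6) (inord 0)), (A (inord 6) (inord 1)).
apply/matrixP => r s; rewrite !mxE.
case: r => rv hr; case: s => sv hs.
have -> : Ordinal hr = inord rv by apply/val_inj; rewrite /= inordK.
have -> : Ordinal hs = inord sv by apply/val_inj; rewrite /= inordK.
rewrite -[A (inord rv) (inord sv)]/(a rv sv) -[A (inord 6) (inord 0)]/(a 6%N 0%N) -[A (inord 6) (inord 1)]/(a 6%N 1%N).
rewrite -!val_eqE /= !inordK //.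
case: rv hr => [|[|[|[|[|[|[|rv]]]]]]] hr; try lia;
case: sv hs => [|[|[|[|[|[|[|sv]]]]]]] hs; try lia;
first [ by rewrite /= ?mulr1n ?mulr0n ?mulr0 ?mulr1 ?addr0 ?add0r
      | by rewrite K //= ?mulr1n ?mulr0n ?mulr0 ?mulr1 ?addr0 ?add0r ].
Qed.
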